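(* Let $G'$ be a graph with a spanning tree $T'$; colour the edges of $T'$ green and all other edges of $G'$ black. Suppose $G$ with green edge set $E(T)$ is obtained from $G'$ with this colouring by a Tutte-extension or a diamond-extension. Then $T$ is a spanning tree of $G$, and $G-E(T)$ can be decomposed into a (possibly empty) 2-regular graph and a (possibly empty) matching if and only if $G'-E(T')$ can.
   Context: All graphs are finite and simple. Tutte-extension: choose two distinct green edges $x_uy_u$ and $x_vy_v$ (possibly sharing an end); subdivide the first by a new vertex $u$ and the second by a new vertex $v$, the four resulting edges being green, and add a new black edge $uv$. Diamond-extension: choose a green edge $xy$, delete it, add new vertices $d_1,d_2,d_3,d_4$ with green edges $xd_1,d_1d_3,d_3d_2,d_2d_4,d_4y$ and black edges $d_1d_2,d_3d_4$. A decomposition of a graph is a partition of its edge set into the edge sets of the listed subgraphs. *)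

(* Defs.v *)
(* Vertices are natural numbers; a graph is a pair
   (V, E) with V : {fset nat} and E : {fset {fset nat}}, every edge being a
   2-element set [fset x; y] (x != y) of vertices in V. *)
From HB Require Import structures.
From mathcomp Require Import all_boot.
From mathcomp Require Import finmap.
Set Implicit Arguments. Unset Strict Implicit. Unset Printing Implicit Defensive.
Local Open Scope fset_scope.

Definition edge (x y : nat) : {fset nat} := [fset x; y].

Definition simple_graph (V : {fset nat}) (E : {fset {fset nat}}) : Prop :=
  forall e, e \in E -> exists x y, [/\ x != y, x \in V, y \in V & e = edge x y].

Definition adj (F : {fset {fset nat}}) : rel nat := fun x y => edge x y \in F.

Definition connected (V : {fset nat}) (F : {fset {fset nat}}) : Prop :=
  forall x y, x \in V -> y \in V ->
    exists p : seq nat, path (adj F) x p /\ last x p = y.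

Definition acyclic (F : {fset {fset nat}}) : Prop :=
  ~ exists c : seq nat, [/\ 3 <= size c, uniq c & cycle (adj F) c].

Definition spanning_tree (V : {fset nat}) (E T : {fset {fset nat}}) : Prop :=
  [/\ T `<=` E, connected V T & acyclic T].

Definition deg (F : {fset {fset nat}}) (v : nat) : nat :=
  #|` [fset e in F | v \in e] |.

Definition two_regular (F : {fset {fset nat}}) : Prop :=
  forall v, (exists2 e, e \in F & v \in e) -> deg F v = 2.

Definition matching (M : {fset {fset nat}}) : Prop :=
  forall e1 e2, e1 \in M -> e2 \in M -> e1 != e2 -> e1 `&` e2 = fset0.

Definition decomposable (E T : {fset {fset nat}}) : Prop :=
  exists F M : {fset {fset nat}},
    [/\ F `|` M = E `\` T, F `&` M = fset0, two_regular F & matching M].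

Definition tutte_extension (V' : {fset nat}) (E' T' : {fset {fset nat}})
    (V : {fset nat}) (E T : {fset {fset nat}}) : Prop :=
  exists xu yu xv yv u v : nat,
    [/\ [/\ edge xu yu \in T', edge xv yv \in T' & edge xu yu != edge xv yv],
        [/\ u \notin V', v \notin V' & u != v],
        V = V' `|` [fset u; v],
        E = (E' `\` [fset edge xu yu; edge xv yv])
              `|` [fset edge xu u; edge u yu; edge xv v; edge v yv; edge u v]
      & T = (T' `\` [fset edge xu yu; edge xv yv])
              `|` [fset edge xu u; edge u yu; edge xv v; edge v yv]].

Definition diamond_extension (V' : {fset nat}) (E' T' : {fset {fset nat}})
    (V : {fset nat}) (E T : {fset {fset nat}}) : Prop :=
  exists x y d1 d2 d3 d4 : nat,
    [/\ edge x y \in T',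
        [/\ d1 \notin V', d2 \notin V', d3 \notin V' & d4 \notin V'],
        uniq [:: d1; d2; d3; d4] /\
        V = V' `|` [fset d1; d2; d3; d4],
        E = (E' `\` [fset edge x y])
              `|` [fset edge x d1; edge d1 d3; edge d3 d2; edge d2 d4;
                        edge d4 y; edge d1 d2; edge d3 d4]
      & T = (T' `\` [fset edge x y])
              `|` [fset edge x d1; edge d1 d3; edge d3 d2; edge d2 d4; edge d4 y]].

(* Main.v *)
Require Import Defs.
From mathcomp Require Import all_boot.
From mathcomp Require Import finmap.
Local Open Scope fset_scope.


Definition sp (a b c d : nat) : bool := ((a == c) && (b == d)) || ((a == d) && (b == c)).

Lemma edge_sym a b : edge a b = edge b a.
Proof. by rewrite /edge fsetUC. Qed.

Lemma in_edge a b c : (c \in edge a b) = (c == a) || (c == b).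
Proof. by rewrite !inE. Qed.

Ltac brute :=
  repeat match goal with
  | H : is_true (?a != ?a) |- _ => by rewrite eqxx in H
  | |- context [?a == ?b :> nat] =>
      case: (eqVneq a b) => [?|?]; subst => //=
  end.

Lemma edgeE a b c d : (edge a b == edge c d) = sp a b c d.
Proof.
apply/eqP/idP.
- move=> E.
  have ha : a \in edge c d by rewrite -E in_edge eqxx.
  have hb : b \in edge c d by rewrite -E in_edge eqxx orbT.
  have hc : c \in edge a b by rewrite E in_edge eqxx.
  have hd : d \in edge a b by rewrite E in_edge eqxx orbT.
  move: ha hb hc hd; rewrite !in_edge /sp; brute.
- rewrite /sp; case/orP=> /andP[/eqP-> /eqP->] //; exact: edge_sym.
Qed.

Definition acyc (r : rel nat) := ~ exists c : seq nat, [/\ 3 <= size c, uniq c & cycle r c].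

Lemma subdiv_acyc (r r' : rel nat) w x y :
 (forall a b, r a b -> a != w -> b != w -> r' a b) ->
 ~~ r x y -> ~~ r y x ->
 (forall a, r w a -> (a == x) || (a == y)) -> (forall a, r a w -> (a == x) || (a == y)) ->
 r' x y -> r' y x -> acyc r' -> acyc r.
Proof.
move=> H1 Hxy Hyx Hw1 Hw2 rxy ryx ac' [c [sz uq cy]].
have sub : {in [predC [:: w]] &, subrel r r'}.
  by move=> a b; rewrite !inE => ha hb /H1; apply.
case: (boolP (w \in c)) => wc.
- case: (rot_to wc) => i p Ec.
  have: uniq (w :: p) by rewrite -Ec rot_uniq.
  have: cycle r (w :: p) by rewrite -Ec rot_cycle.
  have: size (w::p) = size c by rewrite -Ec size_rot.
  case: p Ec => [|a q] Ec; first by move=> /= E; rewrite -E in sz.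
  move=> Es; clear Ec; rewrite /= rcons_path => /andP[rwa /andP [pq rlw]] /andP[wn uq'].
  have pq' : path r' a q.
    apply: (sub_in_path sub) pq; apply/allP => z zin; rewrite !inE.
    by apply: contraNneq wn => <-.
  have la : last a q \in a :: q by exact: mem_last.
  have lw : last a q != w by apply: contraNneq wn => <-.
  case: q Es pq pq' rlw uq' la lw wn => [|b q] Es pq pq' rlw uq' la lw wn.
    by move: Es sz => /= <-.
  have ha := Hw1 _ rwa; have hl := Hw2 _ rlw.
  have neq : a != last b q.
    move: uq' => /= /andP[+ _]; apply: contra => /eqP ->.
    by rewrite mem_last.
  case: q Es pq pq' rlw uq' la lw hl neq wn => [|b' q] Es pq pq' rlw uq' la lw hl neq wn.
    move: pq => /= /andP[rab _].
    move: ha hl neq rab; rewrite /=.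
    by case/orP=> /eqP-> ; case/orP=> /eqP-> //; rewrite ?eqxx // => _; rewrite ?(negbTE Hxy) ?(negbTE Hyx).
  apply: ac'; exists [:: a, b, b' & q]; split => //.
  rewrite /cycle rcons_path pq' /=.
  move: ha hl neq => /=; case/orP=> /eqP-> ; case/orP=> /eqP-> //=; rewrite ?eqxx //.
- apply: ac'; exists c; split => //.
  case: c sz uq cy wc => [|a q] // sz uq cy wc.
  move: cy; rewrite /cycle; apply: (sub_in_path sub).
  apply/allP => z zin; rewrite !inE; apply: contraNneq wc => E; move: zin.
  by rewrite !in_cons -E mem_rcons in_cons orbA orbb.
Qed.

Definition step (r : rel nat) x y w : rel nat :=
  fun a b => (r a b && ~~ sp a b x y) || sp a b x w || sp a b w y.

Lemma step_acyc (r : rel nat) x y w : acyc r -> (forall a, ~~ r w a) -> (forall a, ~~ r a w) ->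
  r x y -> r y x -> x != y -> w != x -> w != y -> acyc (step r x y w).
Proof.
move=> ac f1 f2 rxy ryx nxy nwx nwy.
apply: (@subdiv_acyc _ r w x y) => //.
- move=> a b /orP[/orP[/andP[h _] _ _ //|]|]; rewrite /sp; brute.
- rewrite /step /sp; brute; by rewrite ?andbF.
- rewrite /step /sp; brute; by rewrite ?andbF.
- move=> a; rewrite /step /sp (negbTE (f1 a)); brute.
- move=> a; rewrite /step /sp (negbTE (f2 a)); brute.
Qed.

Lemma step_fresh1 (r : rel nat) x y w z : (forall a, ~~ r z a) -> z != x -> z != y -> z != w ->
  forall a, ~~ step r x y w z a.
Proof. move=> f nx ny nw a; rewrite /step /sp (negbTE (f a)); brute. Qed.

Lemma step_fresh2 (r : rel nat) x y w z : (forall a, ~~ r a z) -> z != x -> z != y -> z != w ->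
  forall a, ~~ step r x y w a z.
Proof. move=> f nx ny nw a; rewrite /step /sp (negbTE (f a)); brute; by rewrite !andbF. Qed.

Lemma step_old (r : rel nat) x y w a b : r a b -> ~~ sp a b x y -> step r x y w a b.
Proof. by move=> h1 h2; rewrite /step h1 h2. Qed.

Lemma step_wy (r : rel nat) x y w : step r x y w w y && step r x y w y w.
Proof. by rewrite /step /sp !eqxx !orbT. Qed.

Lemma step_xw (r : rel nat) x y w : step r x y w x w && step r x y w w x.
Proof. by rewrite /step /sp !eqxx !orbT. Qed.

Lemma step_wy1 (r : rel nat) x y w : step r x y w w y.
Proof. by case/andP: (step_wy r x y w). Qed.
Lemma step_wy2 (r : rel nat) x y w : step r x y w y w.
Proof. by case/andP: (step_wy r x y w). Qed.

Definition reach (r : rel nat) x y := exists p, path r x p /\ last x p = y.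

Lemma reach_refl r x : reach r x x.
Proof. by exists [::]. Qed.

Lemma reach1 (r : rel nat) x y : r x y -> reach r x y.
Proof. by move=> h; exists [:: y]; rewrite /= h. Qed.

Lemma reach_trans r x y z : reach r x y -> reach r y z -> reach r x z.
Proof.
move=> [p [hp <-]] [q [hq <-]]; exists (p ++ q).
by rewrite cat_path hp hq last_cat.
Qed.

Lemma reach_lift (r r' : rel nat) x y :
  (forall a b, r' a b -> reach r a b) -> reach r' x y -> reach r x y.
Proof.
move=> H [p [hp <-]]; elim: p x hp => [|b p IH] x /=; first by move=> _; apply: reach_refl.
case/andP=> hxb hp; apply: reach_trans (H _ _ hxb) (IH _ hp).
Qed.

Definition decomp (D : {fset {fset nat}}) := exists F M : {fset {fset nat}},
    [/\ F `|` M = D, F `&` M = fset0, two_regular F & matching M].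

Lemma decomp_ext (D N : {fset {fset nat}}) :
  matching N ->
  (forall e e', e \in N -> e' \in D -> e `&` e' = fset0) ->
  (forall e, e \in N -> exists2 v, v \in e & forall e', e' \in N -> v \in e' -> e' = e) ->
  decomp (D `|` N) <-> decomp D.
Proof.
move=> mN dis uN.
have nD : forall e, e \in N -> e \notin D.
  move=> e eN; apply/negP => eD; have [v ve _] := uN e eN.
  have := dis e e eN eD; rewrite fsetIid => E; by rewrite E inE in ve.
split.
- move=> [F [M [FM FI tF mM]]].
  have FN : forall e, e \in F -> e \notin N.
    move=> e eF; apply/negP => eN.
    have [v ve uv] := uN e eN.
    have := tF v (ex_intro2 _ _ e eF ve).
    have : [fset e0 in F | v \in e0] `<=` [fset e].
      apply/fsubsetP => e'; rewrite !inE => /andP[e'F ve'].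
      have : e' \in D `|` N by rewrite -FM inE e'F.
      rewrite inE => /orP[e'D|e'N]; last by rewrite (uv e' e'N ve').
      have := dis e e' eN e'D => /fsetP/(_ v); by rewrite !inE ve ve'.
    move/fsubset_leq_card; rewrite cardfs1 /deg => h E; by rewrite E in h.
  exists F, (M `\` N); split => //.
  + apply/fsetP => e; rewrite !inE.
    have := congr1 (fun S => e \in S) FM => /=; rewrite !inE.
    case eF: (e \in F) => /=.
    * by rewrite (negbTE (FN e eF)) orbF.
    * case eN: (e \in N) => /=; first by move=> _; rewrite (negbTE (nD e eN)).
      by rewrite orbF.
  + apply/fsetP => e; have := congr1 (fun S => e \in S) FI => /=; rewrite !inE.
    by case: (e \in F); case: (e \in M); rewrite ?andbF.
  + by move=> e1 e2; rewrite !inE => /andP[_ h1] /andP[_ h2]; apply: mM.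
- move=> [F [M [FM FI tF mM]]].
  have FD : forall e, e \in F -> e \in D by move=> e eF; rewrite -FM inE eF.
  have MD : forall e, e \in M -> e \in D by move=> e eM; rewrite -FM inE eM orbT.
  exists F, (M `|` N); split => //.
  + by rewrite fsetUA FM.
  + apply/fsetP => e; have := congr1 (fun S => e \in S) FI => /=; rewrite !inE.
    case eF: (e \in F) => //=; case eN: (e \in N); last by rewrite orbF.
    by have := nD e eN; rewrite FD.
  + move=> e1 e2; rewrite !inE => /orP[h1|h1] /orP[h2|h2].
    * exact: mM.
    * by move=> _; rewrite fsetIC; apply: dis => //; apply: MD.
    * by move=> _; apply: dis => //; apply: MD.
    * exact: mN.
Qed.

Lemma acyc_sub (r r' : rel nat) : subrel r r' -> acyc r' -> acyc r.
Proof. move=> s ac [c [h1 h2 h3]]; apply: ac; exists c; split => //; exact: sub_cycle h3. Qed.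

Lemma inV V' E' a b : simple_graph V' E' -> edge a b \in E' -> [/\ a \in V', b \in V' & a != b].
Proof.
move=> sg /sg [x [y [nxy xV yV E]]]; move/eqP: E; rewrite edgeE /sp.
by case/orP => /andP[/eqP-> /eqP->]; split; rewrite // eq_sym.
Qed.

Lemma notE V' E' a c : simple_graph V' E' -> c \notin V' ->
  (edge a c \in E') = false /\ (edge c a \in E') = false.
Proof.
move=> sg cV; split; apply/negP => /(inV _ _ _ _ sg) [h1 h2 _]; by rewrite ?h1 ?h2 in cV.
Qed.

Lemma edge_disj (V' : {fset nat}) a b c d : a \notin V' -> b \notin V' -> c \in V' -> d \in V' ->
  edge a b `&` edge c d = fset0.
Proof.
move=> aV bV cV dV.
have n1 : a != c by apply: contraNneq aV => ->.
have n2 : a != d by apply: contraNneq aV => ->.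
have n3 : b != c by apply: contraNneq bV => ->.
have n4 : b != d by apply: contraNneq bV => ->.
apply/fsetP => z; rewrite !inE; brute.
Qed.

Lemma adj_sym F a b : adj F a b = adj F b a.
Proof. by rewrite /adj edge_sym. Qed.

Lemma decompE E T : decomposable E T <-> decomp (E `\` T).
Proof. by []. Qed.

Lemma acyclicE T : acyclic T <-> acyc (adj T).
Proof. by []. Qed.

Lemma connectedE V T : connected V T <-> (forall x y, x \in V -> y \in V -> reach (adj T) x y).
Proof. by []. Qed.

Lemma fresh_adj V' E' T' z : simple_graph V' E' -> T' `<=` E' -> z \notin V' ->
  (forall a, ~~ adj T' z a) /\ (forall a, ~~ adj T' a z).
Proof.
move=> sg sub zV; split=> a; apply/negP => /(fsubsetP sub) h;
  by have [] := notE _ _ a _ sg zV; rewrite h.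
Qed.

Ltac edcase t := repeat match goal with |- context [t == ?X] => let H := fresh in destruct (eqVneq t X) as [H|H]; [rewrite H | ] end.

Lemma tutte_case V' E' T' V E T : simple_graph V' E' -> spanning_tree V' E' T' ->
  tutte_extension V' E' T' V E T ->
  spanning_tree V E T /\ (decomposable E T <-> decomposable E' T').
Proof.
move=> sg [sub con ac] [xu [yu [xv [yv [u [v [[e1T e2T ne12] [uV vV nuv] HV HE HT]]]]]]].
have [xuV yuV nxy1] := inV _ _ _ _ sg (fsubsetP sub _ e1T).
have [xvV yvV nxy2] := inV _ _ _ _ sg (fsubsetP sub _ e2T).
have n1 : u != xu by apply: contraNneq uV => ->.
have n2 : u != yu by apply: contraNneq uV => ->.
have n3 : u != xv by apply: contraNneq uV => ->.
have n4 : u != yv by apply: contraNneq uV => ->.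
have n5 : v != xu by apply: contraNneq vV => ->.
have n6 : v != yu by apply: contraNneq vV => ->.
have n7 : v != xv by apply: contraNneq vV => ->.
have n8 : v != yv by apply: contraNneq vV => ->.
have [fu1 fu2] := fresh_adj _ _ _ _ sg sub uV.
have [fv1 fv2] := fresh_adj _ _ _ _ sg sub vV.
have nT : forall e, e \in [fset edge xu u; edge u yu; edge xv v; edge v yv] -> e \in T.
  by move=> e h; rewrite HT in_fsetU h orbT.
have ins : forall e, e \in T' -> e != edge xu yu -> e != edge xv yv -> e \in T.
  by move=> e h m1 m2; rewrite HT !inE h (negbTE m1) (negbTE m2).
split; first split.
- apply/fsubsetP => e; rewrite HT HE !inE => /orP[/andP[h1 h2]|h].
    by rewrite h1 (fsubsetP sub _ h2).
  move: h; edcase e; by rewrite ?eqxx /= ?orbT.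
- apply/connectedE => a b aV bV.
  have lift : forall a b, adj T' a b -> reach (adj T) a b.
    move=> a' b' h.
    case: (eqVneq (edge a' b') (edge xu yu)) => [E1|m1].
      move/eqP: E1; rewrite edgeE /sp => /orP[]/andP[/eqP-> /eqP->];
      apply: (@reach_trans _ _ u); apply: reach1; rewrite /adj;
      first [apply: nT; by rewrite !inE eqxx ?orbT | rewrite edge_sym; apply: nT; by rewrite !inE eqxx ?orbT].
    case: (eqVneq (edge a' b') (edge xv yv)) => [E1|m2].
      move/eqP: E1; rewrite edgeE /sp => /orP[]/andP[/eqP-> /eqP->];
      apply: (@reach_trans _ _ v); apply: reach1; rewrite /adj;
      first [apply: nT; by rewrite !inE eqxx ?orbT | rewrite edge_sym; apply: nT; by rewrite !inE eqxx ?orbT].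
    by apply: reach1; apply: ins.
  have anchor : forall a, a \in V -> exists2 z, z \in V' & reach (adj T) a z /\ reach (adj T) z a.
    move=> a'; rewrite HV !inE => /orP[aV'|/orP[/eqP->|/eqP->]].
    + by exists a' => //; split; apply: reach_refl.
    + exists xu => //; split; apply: reach1; rewrite /adj;
      first [apply: nT; by rewrite !inE eqxx ?orbT | rewrite edge_sym; apply: nT; by rewrite !inE eqxx ?orbT].
    + exists xv => //; split; apply: reach1; rewrite /adj;
      first [apply: nT; by rewrite !inE eqxx ?orbT | rewrite edge_sym; apply: nT; by rewrite !inE eqxx ?orbT].
  have [za zaV [ra _]] := anchor a aV; have [zb zbV [_ rb]] := anchor b bV.
  apply: reach_trans ra _; apply: reach_trans _ rb; apply: reach_lift lift _; exact: con.
- apply/acyclicE.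
  pose r1 := step (adj T') xu yu u. pose r2 := step r1 xv yv v.
  have a1 : acyc r1 by apply: step_acyc => //; rewrite adj_sym.
  have a2 : acyc r2.
    apply: step_acyc => //; rewrite 1?eq_sym //.
    + by apply: step_fresh1 => //; rewrite eq_sym.
    + by apply: step_fresh2 => //; rewrite eq_sym.
    + by apply: step_old => //; rewrite -edgeE eq_sym.
    + by apply: step_old; rewrite 1?adj_sym // -edgeE edge_sym eq_sym.
  apply: acyc_sub a2 => a b; rewrite /adj HT !inE => /orP[/andP[h1 h2]|h].
    rewrite !edgeE in h1; case/norP: h1 => m1 m2.
    by rewrite /r2 /r1 /step /adj m1 m2 h2.
  move: h; rewrite !edgeE /r2 /r1 /step /adj /sp; brute; by rewrite ?andbT ?orbF ?orbT ?andbT ?orbF ?orbT.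
- have ET : E `\` T = (E' `\` T') `|` [fset edge u v].
    have [e1 e2] := notE _ _ xu _ sg uV.
    have [e3 e4] := notE _ _ yu _ sg uV.
    have [e5 e6] := notE _ _ xv _ sg vV.
    have [e7 e8] := notE _ _ yv _ sg vV.
    have [e9 _] := notE _ _ u _ sg vV.
    have tT : forall e, (e \in E') = false -> (e \in T') = false.
      by move=> e h; apply/negP => /(fsubsetP sub); rewrite h.
    have f1 := tT _ e1. have f2 := tT _ e4. have f3 := tT _ e5. have f4 := tT _ e8.
    have f5 := tT _ e9.
    have g1 := fsubsetP sub _ e1T. have g2 := fsubsetP sub _ e2T.
    apply/fsetP => e; rewrite HE HT !inE.
    move: ne12; edcase e; rewrite ?e1 ?e4 ?e5 ?e8 ?e9 ?f1 ?f2 ?f3 ?f4 ?f5 ?e1T ?e2T ?g1 ?g2 ?eqxx /=;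
      rewrite ?edgeE /sp; brute; rewrite ?andbT ?orbF ?orbT //; try by case: (e \in T'); case: (e \in E').
  change (decomp (E `\` T) <-> decomp (E' `\` T')); rewrite ET; apply: decomp_ext.
  + by move=> f1 f2; rewrite !inE => /eqP-> /eqP->; rewrite eqxx.
  + move=> e e'; rewrite !inE => /eqP-> /andP[_ h].
    have [p [q [_ pV qV ->]]] := sg _ h; exact: (edge_disj _ _ _ _ _ uV vV pV qV).
  + move=> e; rewrite inE => /eqP->; exists u; first by rewrite !inE eqxx.
    by move=> e'; rewrite inE => /eqP->.
Qed.


Ltac side := first [ done | by rewrite eq_sym | by apply: step_wy1 | by apply: step_wy2
  | (apply: step_fresh1; side) | (apply: step_fresh2; side) ].

Lemma diamond_case V' E' T' V E T : simple_graph V' E' -> spanning_tree V' E' T' ->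
  diamond_extension V' E' T' V E T ->
  spanning_tree V E T /\ (decomposable E T <-> decomposable E' T').
Proof.
move=> sg [sub con ac] [x [y [d1 [d2 [d3 [d4 [xyT [d1V d2V d3V d4V] [uq HV] HE HT]]]]]]].
move: uq; rewrite /= !inE !negb_or => /and4P[/and3P[n12 n13 n14] /andP[n23 n24] n34 _].
have [xV yV nxy] := inV _ _ _ _ sg (fsubsetP sub _ xyT).
have m1x : d1 != x by apply: contraNneq d1V => ->.
have m1y : d1 != y by apply: contraNneq d1V => ->.
have m2x : d2 != x by apply: contraNneq d2V => ->.
have m2y : d2 != y by apply: contraNneq d2V => ->.
have m3x : d3 != x by apply: contraNneq d3V => ->.
have m3y : d3 != y by apply: contraNneq d3V => ->.
have m4x : d4 != x by apply: contraNneq d4V => ->.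
have m4y : d4 != y by apply: contraNneq d4V => ->.
have nT : forall e, e \in [fset edge x d1; edge d1 d3; edge d3 d2; edge d2 d4; edge d4 y] -> e \in T.
  by move=> e h; rewrite HT in_fsetU h orbT.
have ins : forall e, e \in T' -> e != edge x y -> e \in T.
  by move=> e h m; rewrite HT !inE h (negbTE m).
split; first split.
- apply/fsubsetP => e; rewrite HT HE !inE => /orP[/andP[h1 h2]|h].
    by rewrite h1 (fsubsetP sub _ h2).
  move: h; edcase e; by rewrite ?eqxx /= ?orbT.
- apply/connectedE => a b aV bV.
  pose cn a b := reach (adj T) a b /\ reach (adj T) b a.
  have cn_trans : forall a b c, cn a b -> cn b c -> cn a c.
    move=> a' b' c' [h1 h2] [h3 h4]; split; [exact: reach_trans h1 h3 | exact: reach_trans h4 h2].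
  have R : forall a b, edge a b \in [fset edge x d1; edge d1 d3; edge d3 d2; edge d2 d4; edge d4 y] ->
      cn a b.
    by move=> a' b' h; split; apply: reach1; rewrite /adj ?[edge b' a']edge_sym; apply: nT.
  have c1 : cn x d1 by apply: R; rewrite !inE eqxx.
  have c2 : cn d1 d3 by apply: R; rewrite !inE eqxx ?orbT.
  have c3 : cn d3 d2 by apply: R; rewrite !inE eqxx ?orbT.
  have c4 : cn d2 d4 by apply: R; rewrite !inE eqxx ?orbT.
  have c5 : cn d4 y by apply: R; rewrite !inE eqxx ?orbT.
  have cxy : cn x y.
    apply: (cn_trans) c1 _; apply: (cn_trans) c2 _; apply: (cn_trans) c3 _; exact: (cn_trans) c4 c5.
  have lift : forall a b, adj T' a b -> reach (adj T) a b.
    move=> a' b' h.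
    case: (eqVneq (edge a' b') (edge x y)) => [E1|m1].
      by move/eqP: E1; rewrite edgeE /sp => /orP[]/andP[/eqP-> /eqP->]; case: cxy.
    by apply: reach1; apply: ins.
  have cs : forall a b, cn a b -> cn b a by move=> a' b' [h1 h2]; split.
  have cx1 : cn d1 x by apply: cs.
  have cx3 : cn d3 x by apply: (cn_trans) cx1; apply: cs.
  have cx2 : cn d2 x by apply: (cn_trans) cx3; apply: cs.
  have cx4 : cn d4 x by apply: (cn_trans) cx2; apply: cs.
  have anchor : forall a, a \in V -> exists2 z, z \in V' & cn a z.
    move=> a'; rewrite HV !inE => /orP[aV'|h].
      by exists a' => //; split; apply: reach_refl.
    exists x => //; move: h => /orP[/orP[/orP[]|]|] /eqP-> //.
  have [za zaV [ra _]] := anchor a aV; have [zb zbV [_ rb]] := anchor b bV.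
  apply: reach_trans ra _; apply: reach_trans _ rb; apply: reach_lift lift _; exact: con.
- apply/acyclicE.
  have [f11 f12] := fresh_adj _ _ _ _ sg sub d1V.
  have [f21 f22] := fresh_adj _ _ _ _ sg sub d2V.
  have [f31 f32] := fresh_adj _ _ _ _ sg sub d3V.
  have [f41 f42] := fresh_adj _ _ _ _ sg sub d4V.
  pose r1 := step (adj T') x y d1. pose r2 := step r1 d1 y d3.
  pose r3 := step r2 d3 y d2. pose r4 := step r3 d2 y d4.
  have a1 : acyc r1 by apply: step_acyc => //; rewrite adj_sym.
  have a2 : acyc r2 by apply: step_acyc => //; side.
  have a3 : acyc r3 by apply: step_acyc => //; side.
  have a4 : acyc r4 by apply: step_acyc => //; side.
  apply: acyc_sub a4 => a b; rewrite /adj HT !inE => /orP[/andP[h1 h2]|h].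
    have [aV bV _] := inV _ _ _ _ sg (fsubsetP sub _ h2).
    have p1 : a != d1 by apply: contraNneq d1V => <-.
    have p2 : a != d2 by apply: contraNneq d2V => <-.
    have p3 : a != d3 by apply: contraNneq d3V => <-.
    have p4 : a != d4 by apply: contraNneq d4V => <-.
    have q1 : b != d1 by apply: contraNneq d1V => <-.
    have q2 : b != d2 by apply: contraNneq d2V => <-.
    have q3 : b != d3 by apply: contraNneq d3V => <-.
    have q4 : b != d4 by apply: contraNneq d4V => <-.
    rewrite edgeE in h1.
    rewrite /r4 /r3 /r2 /r1 /step /adj h2 h1 /= /sp; brute; by rewrite ?andbT ?orbF ?orbT ?andbT ?orbF ?orbT.
  move: h; rewrite !edgeE /r4 /r3 /r2 /r1 /step /adj /sp; brute; by rewrite ?andbT ?orbF ?orbT ?andbT ?orbF ?orbT.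
- have ET : E `\` T = (E' `\` T') `|` [fset edge d1 d2; edge d3 d4].
    have [e1 _] := notE _ _ x _ sg d1V.
    have [e2 _] := notE _ _ d1 _ sg d3V.
    have [e3 _] := notE _ _ d3 _ sg d2V.
    have [e4 _] := notE _ _ d2 _ sg d4V.
    have [_ e5] := notE _ _ y _ sg d4V.
    have [e6 _] := notE _ _ d1 _ sg d2V.
    have [e7 _] := notE _ _ d3 _ sg d4V.
    have tT : forall e, (e \in E') = false -> (e \in T') = false.
      by move=> e h; apply/negP => /(fsubsetP sub); rewrite h.
    have f1 := tT _ e1. have f2 := tT _ e2. have f3 := tT _ e3. have f4 := tT _ e4.
    have f5 := tT _ e5. have f6 := tT _ e6. have f7 := tT _ e7.
    have g1 := fsubsetP sub _ xyT.
    apply/fsetP => e; rewrite HE HT !inE.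
    edcase e; rewrite ?e1 ?e2 ?e3 ?e4 ?e5 ?e6 ?e7 ?f1 ?f2 ?f3 ?f4 ?f5 ?f6 ?f7 ?xyT ?g1 ?eqxx /=;
      rewrite ?edgeE /sp; brute; rewrite ?andbT ?orbF ?orbT //; try by case: (e \in T'); case: (e \in E').
  change (decomp (E `\` T) <-> decomp (E' `\` T')); rewrite ET; apply: decomp_ext.
  + have dj : edge d1 d2 `&` edge d3 d4 = fset0 by apply/fsetP => z; rewrite !inE; brute.
    move=> f1 f2; rewrite !inE => /orP[]/eqP-> /orP[]/eqP->; rewrite ?eqxx // => _.
    by rewrite fsetIC.
  + move=> e e'; rewrite !inE => /orP[]/eqP-> /andP[_ h];
    have [p [q [_ pV qV ->]]] := sg _ h.
      exact: (edge_disj _ _ _ _ _ d1V d2V pV qV).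
    exact: (edge_disj _ _ _ _ _ d3V d4V pV qV).
  + move=> e; rewrite !inE => /orP[]/eqP->.
      exists d1; first by rewrite !inE eqxx.
      by move=> e'; rewrite !inE => /orP[]/eqP-> //; rewrite !inE; brute.
    exists d3; first by rewrite !inE eqxx.
    by move=> e'; rewrite !inE => /orP[]/eqP-> //; rewrite !inE; brute.
Qed.

Theorem lemma10 (V' : {fset nat}) (E' T' : {fset {fset nat}})
    (V : {fset nat}) (E T : {fset {fset nat}}) :
  simple_graph V' E' ->
  spanning_tree V' E' T' ->
  tutte_extension V' E' T' V E T \/ diamond_extension V' E' T' V E T ->
  spanning_tree V E T /\ (decomposable E T <-> decomposable E' T').
Proof.
move=> sg st [h|h]; [exact: tutte_case sg st h | exact: diamond_case sg st h].
Qed.
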